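(* Let $a\ge 1$, and let $(c,d),(e,f)\in\mathcal{B}$ with $d$ and $f$ odd, $d\neq f$, and $\max\{c,c+d,e,e+f\}<a$. Then $U=\{(a,0),(c,d),(e,f)\}\subseteq\mathcal{B}$ is unavoidable.
   Context: The bicyclic inverse semigroup is $\mathcal{B}=\{(a,b)\in\mathbb{Z}\times\mathbb{Z}\mid a\ge 0,\ a+b\ge 0\}$ with multiplication $(a,b)(c,d)=(\max\{c+d,a\}-d,\ b+d)$. A subset $U\subseteq\mathcal{B}$ is called avoidable if $\mathcal{B}$ can be partitioned into two subsets $A$ and $B$ such that no element of $U$ can be written as a product $xy$ of two distinct elements $x\neq y$ both in $A$, or both in $B$. A set is unavoidable if it is not avoidable. *)

(* Defs.v *)
From Stdlib Require Import ZArith.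
Open Scope Z_scope.

(* Bicyclic inverse semigroup: carrier is the predicate inB on Z * Z. *)
Definition inB (p : Z * Z) : Prop := 0 <= fst p /\ 0 <= fst p + snd p.

Definition bmul (p q : Z * Z) : Z * Z :=
  (Z.max (fst q + snd q) (fst p) - snd q, snd p + snd q).

(* A 2-partition {A, B} of the bicyclic semigroup is encoded by a colouring
   col : Z*Z -> bool (A = col true, B = col false, restricted to inB). *)
Definition avoidable (U : Z * Z -> Prop) : Prop :=
  exists col : Z * Z -> bool,
    forall x y : Z * Z, inB x -> inB y -> x <> y -> col x = col y ->
      ~ U (bmul x y).

Definition unavoidable (U : Z * Z -> Prop) : Prop := ~ avoidable U.

(* Main.v *)
Require Import Defs.
From Stdlib Require Import ZArith Lia.
Open Scope Z_scope.

Lemma cyc5 (b1 b2 b3 b4 b5 : bool) :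
  b1 = b2 \/ b2 = b3 \/ b3 = b4 \/ b4 = b5 \/ b5 = b1.
Proof. destruct b1, b2, b3, b4, b5; tauto. Qed.

Ltac fin :=
  repeat split;
  try (unfold inB; cbn [fst snd]; lia);
  try (let H := fresh in intro H; inversion H; lia);
  try congruence;
  unfold bmul; cbn [fst snd];
  first [ left; f_equal; lia | right; left; f_equal; lia
        | right; right; f_equal; lia ].

Lemma core (a c d e f p q : Z) :
  1 <= a -> inB (c, d) -> inB (e, f) ->
  d = 2*p+1 -> f = 2*q+1 -> f < d ->
  Z.max (Z.max c (c + d)) (Z.max e (e + f)) < a ->
  forall col : Z * Z -> bool, exists x y, inB x /\ inB y /\ x <> y /\
    col x = col y /\ (bmul x y = (a,0) \/ bmul x y = (c,d) \/ bmul x y = (e,f)).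
Proof.
  intros Ha [Hc1 Hc2] [He1 He2] Hd Hf Hfd Hm col; cbn [fst snd] in *.
  set (k := p - q). set (v := p + q + 1).
  set (P := (c, k)). set (M1 := (a + k, - k)). set (M2 := (a, k)).
  destruct (Z_le_gt_dec 0 v) as [Hv|Hv].
  - set (V := (0, v)). set (Q := (e + v, - k)).
    destruct (cyc5 (col V) (col P) (col M1) (col M2) (col Q)) as [H|[H|[H|[H|H]]]].
    + exists V, P; unfold V, P, k, v in *; fin.
    + exists M1, P; unfold M1, P, k, v in *; fin.
    + exists M1, M2; unfold M1, M2, k, v in *; fin.
    + exists Q, M2; unfold Q, M2, k, v in *; fin.
    + exists Q, V; unfold Q, V, k, v in *; fin.
  - set (V := (- v, v)). set (Q := (e, - k)).
    destruct (cyc5 (col V) (col P) (col M1) (col M2) (col Q)) as [H|[H|[H|[H|H]]]].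
    + exists V, P; unfold V, P, k, v in *; fin.
    + exists M1, P; unfold M1, P, k, v in *; fin.
    + exists M1, M2; unfold M1, M2, k, v in *; fin.
    + exists Q, M2; unfold Q, M2, k, v in *; fin.
    + exists V, Q; unfold Q, V, k, v in *; fin.
Qed.

Theorem lemma5p3 (a c d e f : Z) :
  1 <= a ->
  inB (c, d) -> inB (e, f) ->
  Z.odd d = true -> Z.odd f = true -> d <> f ->
  Z.max (Z.max c (c + d)) (Z.max e (e + f)) < a ->
  unavoidable (fun p => p = (a, 0) \/ p = (c, d) \/ p = (e, f)).
Proof.
  intros Ha H1 H2 Od Of Hdf Hm [col Hcol].
  apply Z.odd_spec in Od as [p Hp]. apply Z.odd_spec in Of as [q Hq].
  destruct (Z.lt_total f d) as [Hlt|[Heq|Hgt]].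
  - destruct (core a c d e f p q Ha H1 H2 Hp Hq Hlt Hm col)
      as (x & y & Hx & Hy & Hxy & Hc & HU).
    exact (Hcol x y Hx Hy Hxy Hc HU).
  - lia.
  - assert (Hm' : Z.max (Z.max e (e + f)) (Z.max c (c + d)) < a) by lia.
    destruct (core a e f c d q p Ha H2 H1 Hq Hp Hgt Hm' col)
      as (x & y & Hx & Hy & Hxy & Hc & HU).
    apply (Hcol x y Hx Hy Hxy Hc). tauto.
Qed.
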